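(* Consider the following heap data structure $H$ in the word-RAM model. A global time counter $t$ (initially $0$) is incremented after every \textsc{Push}; for an element $x_i$ of $H$, $a_i$ denotes the value of $t$ when $x_i$ was pushed. The elements of $H$ are partitioned into an array of buckets $B$; each bucket $B[j]$ contains one or two Fibonacci heaps, every element of $H$ lies in exactly one of these Fibonacci heaps, and with each Fibonacci heap $F$ a half-open interval $I_F\subset\mathbb{R}$ is stored, such that at all times $t$: (a) an element $x_i\in H$ is in $F$ if and only if $a_i\in I_F$; (b) the interval $I_F$ of every $F$ in $B[j]$ has length $2^j$; (c) all intervals of the Fibonacci heaps in $B[j-1]$ lie to the right of the intervals of the Fibonacci heaps in $B[j]$; (d) all the intervals together partition $[0,t)$. Then for any element $x_i\in H$, given $a_i$ and $t$, the bucket and the Fibonacci heap containing $x_i$ can be computed in constant time.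
   Context: Fibonacci heaps are the standard heap data structure of Fredman and Tarjan. Computation is in the word-RAM model. *)

(* Defs.v *)
From Stdlib Require Import Reals Lia List Arith.
Import ListNotations.
Open Scope R_scope.

(* Words are natural numbers < 2^w; arithmetic wraps modulo 2^w.        *)

Inductive binop : Set :=
  | OAdd | OSub | OMul | ODiv | OMod
  | OAnd | OOr | OXor | OShl | OShr | OLt | OEq.

Inductive instr : Set :=
  | IConst (d c : nat)
  | IBin (o : binop) (d s1 s2 : nat)
  | IMsb (d s : nat)              (* r_d := floor(log2 r_s)  (0 if r_s = 0) *)
  | IJz (s target : nat)
  | IJmp (target : nat)
  | IHalt.

Definition eval_binop (w : nat) (o : binop) (x y : nat) : nat :=
  match o with
  | OAdd => (x + y) mod 2 ^ w
  | OSub => (x + 2 ^ w - y) mod 2 ^ w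
  | OMul => (x * y) mod 2 ^ w
  | ODiv => x / y
  | OMod => x mod y
  | OAnd => Nat.land x y
  | OOr => Nat.lor x y
  | OXor => Nat.lxor x y
  | OShl => (Nat.shiftl x y) mod 2 ^ w
  | OShr => Nat.shiftr x y
  | OLt => if Nat.ltb x y then 1%nat else 0%nat
  | OEq => if Nat.eqb x y then 1%nat else 0%nat
  end.

Definition regfile := nat -> nat.

Definition upd (rf : regfile) (d v : nat) : regfile :=
  fun r => if Nat.eqb r d then v else rf r.

Fixpoint run (w : nat) (prog : list instr) (fuel pc : nat) (rf : regfile)
  : option regfile :=
  match fuel with
  | O => None
  | S f =>
    match nth_error prog pc with
    | None => None
    | Some IHalt => Some rf
    | Some (IConst d c) => run w prog f (S pc) (upd rf d (c mod 2 ^ w))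
    | Some (IBin o d s1 s2) =>
        run w prog f (S pc) (upd rf d (eval_binop w o (rf s1) (rf s2)))
    | Some (IMsb d s) => run w prog f (S pc) (upd rf d (Nat.log2 (rf s)))
    | Some (IJz s tg) =>
        if Nat.eqb (rf s) 0 then run w prog f tg rf else run w prog f (S pc) rf
    | Some (IJmp tg) => run w prog f tg rf
    end
  end.

Definition init_regs (a t : nat) : regfile :=
  fun r => if Nat.eqb r 0 then a else if Nat.eqb r 1 then t else 0%nat.

(* A half-open real interval: [lo, hi) if lclosed, (lo, hi] otherwise. *)
Record hinterval := { lo : R; hi : R; lclosed : bool }.

Definition in_int (I : hinterval) (x : R) : Prop :=
  if lclosed I then lo I <= x < hi I else lo I < x <= hi I.

(* Each Fibonacci heap F is represented by its interval I_F; by invariant (a)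
   its element set is exactly {x_i in H | a_i in I_F}.  A bucket B[j] is the
   list of (intervals of) its Fibonacci heaps. *)
Record heap_state := {
  time : nat;
  elems : list nat;                 (* the push times a_i of the elements of H *)
  buckets : list (list hinterval)
}.

Definition in_bucket (H : heap_state) (j : nat) (I : hinterval) : Prop :=
  exists Bj, nth_error (buckets H) j = Some Bj /\ In I Bj.

Definition heap_inv (H : heap_state) : Prop :=
  (* push times are distinct values of t at earlier pushes *)
  (forall a, In a (elems H) -> (a < time H)%nat) /\
  NoDup (elems H) /\
  (forall j Bj, nth_error (buckets H) j = Some Bj ->
     length Bj = 1%nat \/ length Bj = 2%nat) /\
  (forall j I, in_bucket H j I -> hi I - lo I = 2 ^ j) /\
  (forall j I G x y, in_bucket H j I -> in_bucket H (S j) G ->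
     in_int I x -> in_int G y -> y < x) /\
  (* (d) all the intervals together partition [0, t) *)
  (forall j I x, in_bucket H j I -> in_int I x -> 0 <= x < INR (time H)) /\
  (forall x, 0 <= x < INR (time H) ->
     exists j Bj k I, nth_error (buckets H) j = Some Bj /\
       nth_error Bj k = Some I /\ in_int I x) /\
  (forall j Bj k I j' Bj' k' I' x,
     nth_error (buckets H) j = Some Bj -> nth_error Bj k = Some I ->
     nth_error (buckets H) j' = Some Bj' -> nth_error Bj' k' = Some I' ->
     in_int I x -> in_int I' x -> j = j' /\ k = k').

(* Main.v *)
Require Import Defs.
From Stdlib Require Import Reals Lia Lra List Arith Classical ZArith.
Require Import Defs.
Import ListNotations.
Open Scope nat_scope.

Fixpoint Rf (c : nat -> nat) (j : nat) : nat :=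
  match j with 0 => 0 | S j' => Rf c j' + c j' * 2 ^ j' end.

Lemma A1 c m : (forall i, i < m -> 1 <= c i <= 2) ->
  forall j, j <= m -> 2 ^ j <= Rf c j + 1 /\ Rf c j + 2 <= 2 ^ S j.
Proof.
  intros Hc j. induction j; intros Hj; simpl.
  - lia.
  - destruct IHj as [h1 h2]; [lia|]. specialize (Hc j ltac:(lia)). simpl in h2.
    destruct (c j) as [|[|[|]]]; lia.
Qed.

Lemma Aexp c m : (forall i, i < m -> 1 <= c i <= 2) ->
  forall d K, K + d <= m -> exists X, Rf c (K+d) + 1 - 2^(K+d) = Rf c K + 1 - 2^K + 2^K * X.
Proof.
  intros Hc d. induction d; intros K Hd.
  - exists 0. rewrite Nat.add_0_r. lia.
  - destruct (IHd K ltac:(lia)) as [X HX].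
    destruct (A1 c m Hc (K+d) ltac:(lia)) as [h1 h2].
    replace (K + S d) with (S (K + d)) by lia. simpl Rf.
    specialize (Hc (K+d) ltac:(lia)).
    exists (X + (c (K+d) - 1) * 2^d).
    rewrite Nat.pow_succ_r'. rewrite Nat.pow_add_r in *.
    assert (c (K+d) = 1 \/ c (K+d) = 2) as [E|E] by lia; rewrite E in *; nia.
Qed.

Lemma A2 c m : (forall i, i < m -> 1 <= c i <= 2) ->
  forall K, K <= m -> (Rf c m + 1 - 2^m) mod 2^K = Rf c K + 1 - 2^K.
Proof.
  intros Hc K HK. destruct (Aexp c m Hc (m - K) K ltac:(lia)) as [X HX].
  replace (K + (m - K)) with m in HX by lia. rewrite HX.
  destruct (A1 c m Hc K HK) as [h1 h2]. simpl in h2.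
  symmetry. apply (Nat.mod_unique _ _ X); lia.
Qed.

Definition prog : list instr := [
 IConst 2 1;
 IBin OAdd 3 1 2;
 IMsb 4 3;
 IBin OShl 5 2 4;
 IBin OSub 6 3 5;
 IBin OSub 7 1 0;
 IMsb 8 7;
 IBin OShl 9 2 8;
 IBin OMod 10 6 9;
 IBin OAdd 11 9 10;
 IBin OAdd 13 7 2;
 IBin OLt 12 11 13;
 IBin OAdd 14 8 12;
 IBin OSub 15 14 2;
 IBin OAdd 16 15 2;
 IBin OShl 17 2 16;
 IBin OMod 18 6 17;
 IBin OAdd 19 17 18;
 IBin OSub 20 3 19;
 IBin OSub 21 0 20;
 IBin OShl 22 2 15;
 IBin OMod 23 21 22;
 IBin OSub 24 0 23;
 IBin OShr 0 15 99;
 IBin OShr 1 24 99;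
 IHalt ].

Lemma ev_add w x y : x + y < 2 ^ w -> eval_binop w OAdd x y = x + y.
Proof. intros; simpl; apply Nat.mod_small; auto. Qed.
Lemma ev_sub w x y : y <= x -> x < 2 ^ w -> eval_binop w OSub x y = x - y.
Proof.
  intros; simpl. replace (x + 2^w - y) with ((x - y) + 1 * 2^w) by lia.
  rewrite Nat.Div0.mod_add. apply Nat.mod_small; lia.
Qed.
Lemma ev_shl w k : 2 ^ k < 2 ^ w -> eval_binop w OShl 1 k = 2 ^ k.
Proof. intros; simpl. rewrite Nat.shiftl_1_l. apply Nat.mod_small; auto. Qed.

Lemma run_bin w p f pc rf o d s1 s2 v : nth_error p pc = Some (IBin o d s1 s2) ->
  eval_binop w o (rf s1) (rf s2) = v -> run w p (S f) pc rf = run w p f (S pc) (upd rf d v).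
Proof. intros E V. cbn [run]. rewrite E, V. reflexivity. Qed.
Lemma run_const w p f pc rf d c v : nth_error p pc = Some (IConst d c) ->
  c mod 2 ^ w = v -> run w p (S f) pc rf = run w p f (S pc) (upd rf d v).
Proof. intros E V. cbn [run]. rewrite E, V. reflexivity. Qed.
Lemma run_msb w p f pc rf d s v : nth_error p pc = Some (IMsb d s) ->
  Nat.log2 (rf s) = v -> run w p (S f) pc rf = run w p f (S pc) (upd rf d v).
Proof. intros E V. cbn [run]. rewrite E, V. reflexivity. Qed.
Lemma run_halt w p f pc rf : nth_error p pc = Some IHalt -> run w p (S f) pc rf = Some rf.
Proof. intros E. cbn [run]. rewrite E. reflexivity. Qed.

Ltac lk := cbn [upd init_regs Nat.eqb].

Lemma program_correct w a t m j n e :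
  S t < 2 ^ w -> 2 ^ m <= S t < 2 ^ S m -> S j <= m ->
  2 ^ j + (S t - 2^m) mod 2 ^ j <= t - a ->
  t - a + 1 <= 2 ^ S j + (S t - 2^m) mod 2 ^ S j ->
  n <= a < n + 2 ^ j ->
  n = S t - (2 ^ S j + (S t - 2^m) mod 2 ^ S j) + e * 2 ^ j ->
  exists rf, run w prog 26 0 (init_regs a t) = Some rf /\ rf 0 = j /\ rf 1 = n.
Proof.
  intros Hw Hm Hj HR1 HR2 Hn He.
  set (D := S t - 2 ^ m) in *.
  set (u := t - a) in *.
  assert (Hp : forall k, 1 <= 2 ^ k) by (intro k; induction k; simpl; lia).
  assert (Hmono : forall k l, k <= l -> 2 ^ k <= 2 ^ l) by (intros; apply Nat.pow_le_mono_r; lia).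
  assert (HmodK : forall K, K <= m -> 2 ^ K + D mod 2 ^ K <= S t).
  { intros K HK. pose proof (Hmono K m HK). pose proof (Nat.Div0.mod_le D (2^K)). unfold D in *. lia. }
  assert (Hm2 : m < 2 ^ m) by (apply Nat.pow_gt_lin_r; lia).
  pose proof (Hp j) as Hpj.
  assert (Hsj : 2 ^ S j = 2 * 2 ^ j) by reflexivity.
  assert (Hssj : 2 ^ S (S j) = 2 * 2 ^ S j) by reflexivity.
  assert (Hmodlt : D mod 2 ^ S j < 2 ^ S j) by (apply Nat.mod_upper_bound; pose proof (Hp (S j)); lia).
  set (K := Nat.log2 u).
  assert (HKs : 2 ^ K <= u < 2 ^ S K) by (apply Nat.log2_spec; lia).
  set (fl := if (2 ^ K + D mod 2 ^ K) <? (u + 1) then 1 else 0).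
  assert (HKf : K + fl = S j /\ K <= m).
  { destruct (Nat.lt_ge_cases u (2 ^ S j)) as [Hl|Hl].
    - assert (K = j) by (apply Nat.log2_unique; lia). subst fl.
      rewrite H. replace (2 ^ j + D mod 2 ^ j <? u + 1) with true. lia.
      symmetry; apply Nat.ltb_lt; lia.
    - assert (K = S j) by (apply Nat.log2_unique; lia). subst fl.
      rewrite H. replace (2 ^ S j + D mod 2 ^ S j <? u + 1) with false. lia.
      symmetry; apply Nat.ltb_ge; lia. }
  destruct HKf as [HKf HKm].
  pose proof (HmodK K HKm) as HK1.
  pose proof (HmodK (S j) Hj) as HK2.
  pose proof (Hmono (S j) m Hj).
  pose proof (Hmono j m ltac:(lia)).
  assert (HQ : S t - (2 ^ S j + D mod 2 ^ S j) <= n) by lia.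
  assert (Hr : (a - (S t - (2 ^ S j + D mod 2 ^ S j))) mod 2 ^ j = a - n).
  { symmetry. apply (Nat.mod_unique _ _ e); lia. }
  eexists; split.
  { unfold prog.
    erewrite run_const with (v := 1); [|reflexivity| apply Nat.mod_small; lia].
    erewrite run_bin with (v := S t); [|reflexivity| lk; rewrite (ev_add w t 1) by lia; lia].
    erewrite run_msb with (v := m); [|reflexivity| lk; apply Nat.log2_unique; [lia| exact Hm]].
    erewrite run_bin with (v := 2 ^ m); [|reflexivity| lk; apply (ev_shl w m); lia].
    erewrite run_bin with (v := D); [|reflexivity| lk; apply (ev_sub w (S t) (2^m)); lia].
    erewrite run_bin with (v := u); [|reflexivity| lk; apply (ev_sub w t a); lia].
    erewrite run_msb with (v := K); [|reflexivity| lk; reflexivity].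
    erewrite run_bin with (v := 2 ^ K); [|reflexivity| lk; apply (ev_shl w K); lia].
    erewrite run_bin with (v := D mod 2 ^ K); [|reflexivity| lk; reflexivity].
    erewrite run_bin with (v := 2 ^ K + D mod 2 ^ K); [|reflexivity| lk; apply (ev_add w (2^K) (D mod 2 ^ K)); lia].
    erewrite run_bin with (v := u + 1); [|reflexivity| lk; apply (ev_add w u 1); lia].
    erewrite run_bin with (v := fl); [|reflexivity| lk; reflexivity].
    erewrite run_bin with (v := S j); [|reflexivity| lk; rewrite (ev_add w K fl) by lia; exact HKf].
    erewrite run_bin with (v := j); [|reflexivity| lk; rewrite (ev_sub w (S j) 1) by lia; lia].
    erewrite run_bin with (v := S j); [|reflexivity| lk; rewrite (ev_add w j 1) by lia; lia].
    erewrite run_bin with (v := 2 ^ S j); [|reflexivity| lk; apply (ev_shl w (S j)); lia].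
    erewrite run_bin with (v := D mod 2 ^ S j); [|reflexivity| lk; reflexivity].
    erewrite run_bin with (v := 2 ^ S j + D mod 2 ^ S j); [|reflexivity| lk; apply (ev_add w (2 ^ S j)); lia].
    erewrite run_bin with (v := S t - (2 ^ S j + D mod 2 ^ S j)); [|reflexivity| lk; apply ev_sub; lia].
    erewrite run_bin with (v := a - (S t - (2 ^ S j + D mod 2 ^ S j))); [|reflexivity| lk; apply ev_sub; lia].
    erewrite run_bin with (v := 2 ^ j); [|reflexivity| lk; apply (ev_shl w j); lia].
    erewrite run_bin with (v := a - n); [|reflexivity| lk; exact Hr].
    erewrite run_bin with (v := n); [|reflexivity| lk; rewrite ev_sub by lia; lia].
    erewrite run_bin with (v := j); [|reflexivity| lk; reflexivity].
    erewrite run_bin with (v := n); [|reflexivity| lk; reflexivity].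
    apply run_halt; reflexivity. }
  lk. cbn. split; [lia|]. lia.
Qed.

Open Scope R_scope.

Definition pos (H : heap_state) j k I :=
  exists Bj, nth_error (buckets H) j = Some Bj /\ nth_error Bj k = Some I.

Lemma pos_inb H j k I : pos H j k I -> in_bucket H j I.
Proof. intros [Bj [E Hk]]. exists Bj; split; auto. eapply nth_error_In; eauto. Qed.

Lemma pos_lt H j k I : pos H j k I -> (j < length (buckets H))%nat.
Proof. intros [Bj [E _]]. apply nth_error_Some. congruence. Qed.

Lemma pow2_INR j : 2 ^ j = INR (2 ^ j)%nat.
Proof. rewrite pow_INR. replace (INR 2) with 2 by (simpl; lra). reflexivity. Qed.

Lemma pow2_ge1 j : 1 <= 2 ^ j.
Proof. apply pow_R1_Rle; lra. Qed.

Lemma len_I H j k I : heap_inv H -> pos H j k I -> hi I - lo I = 2 ^ j.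
Proof. intros Hinv P. destruct Hinv as (_&_&_&Hb&_). apply Hb. eapply pos_inb; eauto. Qed.

Lemma in_range H j k I x : heap_inv H -> pos H j k I -> in_int I x -> 0 <= x < INR (time H).
Proof. intros Hinv P Hx. destruct Hinv as (_&_&_&_&_&Hd&_). eapply Hd; eauto. eapply pos_inb; eauto. Qed.

Lemma uniqI H j k I j' k' I' x : heap_inv H -> pos H j k I -> pos H j' k' I' ->
  in_int I x -> in_int I' x -> j = j' /\ k = k' /\ I = I'.
Proof.
  intros Hinv [B [E1 E2]] [B' [E1' E2']] h h'. destruct Hinv as (_&_&_&_&_&_&_&Hu).
  destruct (Hu _ _ _ _ _ _ _ _ _ E1 E2 E1' E2' h h') as [-> ->].
  rewrite E1 in E1'. injection E1' as ->. rewrite E2 in E2'. injection E2' as ->. auto.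
Qed.

Lemma cover H x : heap_inv H -> 0 <= x < INR (time H) -> exists j k I, pos H j k I /\ in_int I x.
Proof.
  intros Hinv Hx. destruct Hinv as (_&_&_&_&_&_&Hc&_).
  destruct (Hc x Hx) as (j&Bj&k&I&E1&E2&Hi). exists j, k, I. split; auto. exists Bj; auto.
Qed.

Lemma midpoint H j k I : heap_inv H -> pos H j k I -> in_int I ((lo I + hi I)/2).
Proof.
  intros Hinv P. pose proof (len_I H j k I Hinv P). pose proof (pow2_ge1 j).
  unfold in_int; destruct (lclosed I); lra.
Qed.

Lemma bucket_len H j Bj : heap_inv H -> nth_error (buckets H) j = Some Bj ->
  length Bj = 1%nat \/ length Bj = 2%nat.
Proof. intros Hinv E. destruct Hinv as (_&_&Hl&_). eauto. Qed.

Lemma bucket_exists H j : heap_inv H -> (j < length (buckets H))%nat -> exists k I, pos H j k I.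
Proof.
  intros Hinv Hj. destruct (nth_error (buckets H) j) as [Bj|] eqn:E.
  - destruct (bucket_len H j Bj Hinv E) as [L|L]; destruct Bj as [|I0 Bj]; simpl in L; try lia;
    exists 0%nat, I0, (I0 :: Bj); auto.
  - apply nth_error_Some in Hj. congruence.
Qed.

Lemma mono_d H : heap_inv H -> forall d j k I j' k' G x y, pos H j k I -> pos H j' k' G ->
  j' = (S d + j)%nat -> in_int I x -> in_int G y -> y < x.
Proof.
  intros Hinv d. induction d; intros j k I j' k' G x y P P' Ej hx hy.
  - destruct Hinv as (_&_&_&_&Hc&_). simpl in Ej. subst j'.
    eapply Hc; eauto; eapply pos_inb; eauto.
  - pose proof (pos_lt _ _ _ _ P').
    destruct (bucket_exists H (S j) Hinv ltac:(lia)) as (kk&K&PK).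
    pose proof (midpoint H _ _ _ Hinv PK) as hz.
    assert (y < (lo K + hi K)/2) by (apply (IHd (S j) kk K j' k' G _ _ PK P'); [lia|auto|auto]).
    assert ((lo K + hi K)/2 < x).
    { destruct Hinv as (_&_&_&_&Hc&_). eapply Hc; eauto; eapply pos_inb; eauto. }
    lra.
Qed.

Lemma mono H j k I j' k' G x y : heap_inv H -> pos H j k I -> pos H j' k' G ->
  (j < j')%nat -> in_int I x -> in_int G y -> y < x.
Proof. intros Hinv P P' Hlt hx hy. apply (mono_d H Hinv (j' - j - 1) j k I j' k' G x y P P'); auto. lia. Qed.

Lemma floor_nat z : 0 <= z -> exists p : nat, INR p <= z < INR p + 1.
Proof.
  intros Hz. assert (exists N : nat, z < INR N) as [N HN].
  { destruct (archimed z) as [h1 _]. exists (Z.to_nat (up z)).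
    rewrite INR_IZR_INZ, Z2Nat.id; [lra|].
    apply le_IZR. lra. }
  revert z Hz HN. induction N; intros z Hz HN.
  - simpl in HN. lra.
  - destruct (Rlt_or_le z (INR N)) as [h|h].
    + apply IHN; auto.
    + exists N. rewrite S_INR in HN. lra.
Qed.

Lemma has_int H j k I : heap_inv H -> pos H j k I -> exists p : nat, in_int I (INR p).
Proof.
  intros Hinv P. pose proof (len_I H j k I Hinv P). pose proof (pow2_ge1 j).
  assert (hz : in_int I (lo I + /2)) by (unfold in_int; destruct (lclosed I); lra).
  pose proof (in_range H j k I _ Hinv P hz).
  destruct (floor_nat (lo I + /2)) as [p Hp]; [lra|].
  unfold in_int in *. destruct (lclosed I).
  - destruct (Rle_or_lt (lo I) (INR p)).
    + exists p. lra.
    + exists (S p). rewrite S_INR. lra.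
  - destruct (Rlt_or_le (lo I) (INR p)).
    + exists p. lra.
    + exists (S p). rewrite S_INR. lra.
Qed.

Lemma least_int I p : in_int I (INR p) -> exists n, (n <= p)%nat /\ in_int I (INR n) /\
  (n = 0%nat \/ ~ in_int I (INR (n - 1))).
Proof.
  induction p; intros h.
  - exists 0%nat; auto.
  - destruct (classic (in_int I (INR p))) as [h'|h'].
    + destruct (IHp h') as (n&?&?&?). exists n; repeat split; auto.
    + exists (S p). repeat split; auto. right. replace (S p - 1)%nat with p by lia. auto.
Qed.

Lemma Lint H : heap_inv H -> forall n j k I, pos H j k I -> in_int I (INR n) ->
  (n = 0%nat \/ ~ in_int I (INR (n-1))) -> lo I = INR n /\ lclosed I = true.
Proof.
  intros Hinv n. pattern n; apply lt_wf_ind; clear n. intros n IH j k I P Hn Hmin.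
  pose proof (len_I H j k I Hinv P) as HL. pose proof (pow2_ge1 j).
  pose proof (in_range H j k I _ Hinv P Hn) as Hr.
  destruct n as [|p].
  - simpl INR in *. unfold in_int in Hn. destruct (lclosed I) eqn:Ec.
    + assert (h : in_int I (lo I)) by (unfold in_int; rewrite Ec; lra).
      pose proof (in_range H j k I _ Hinv P h). split; [lra|auto].
    + assert (h : in_int I (lo I / 2)) by (unfold in_int; rewrite Ec; lra).
      pose proof (in_range H j k I _ Hinv P h). lra.
  - destruct Hmin as [Hmin|Hmin]; [discriminate|]. replace (S p - 1)%nat with p in Hmin by lia.
    assert (hp: 0 <= INR p < INR (time H)).
    { split; [apply pos_INR|]. rewrite S_INR in Hr. lra. }
    destruct (cover H _ Hinv hp) as (j'&k'&J&PJ&hJ).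
    destruct (least_int J p hJ) as (n'&Hn'p&hn'&Hmin').
    destruct (IH n' ltac:(lia) j' k' J PJ hn' Hmin') as [HloJ HcJ].
    pose proof (len_I H j' k' J Hinv PJ) as HLJ. rewrite pow2_INR in HLJ.
    assert (notJ: forall x, in_int I x -> in_int J x -> False).
    { intros x h1 h2. destruct (uniqI H j k I j' k' J x Hinv P PJ h1 h2) as (_&_&<-). contradiction. }
    pose proof (le_INR _ _ Hn'p) as Hle.
    rewrite S_INR in Hn |- *.
    assert (hiJ : hi J = INR p + 1).
    { assert (h0 : ~ in_int J (INR p + 1)) by (intro; eapply notJ; eauto).
      unfold in_int in hJ, h0. rewrite HcJ in hJ, h0.
      assert (E : hi J = INR (n' + 2 ^ j')) by (rewrite plus_INR; lra).
      assert (h1 : (p < n' + 2 ^ j')%nat) by (apply INR_lt; lra).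
      assert (h2 : (n' + 2 ^ j' <= S p)%nat) by (apply INR_le; rewrite S_INR; lra).
      replace (n' + 2 ^ j')%nat with (S p) in E by lia. rewrite S_INR in E. exact E. }
    unfold in_int in Hn, Hmin. destruct (lclosed I) eqn:Ec.
    + destruct (Rlt_or_le (lo I) (INR p + 1)) as [h|h].
      * exfalso. apply (notJ ((lo I + INR p + 1)/2)).
        -- unfold in_int; rewrite Ec. lra.
        -- unfold in_int; rewrite HcJ. lra.
      * split; [lra|auto].
    + exfalso. apply (notJ ((lo I + INR p + 1)/2)).
      * unfold in_int; rewrite Ec. lra.
      * unfold in_int; rewrite HcJ. lra.
Qed.

Lemma shape H j k I : heap_inv H -> pos H j k I -> exists g, lo I = INR g /\ lclosed I = true.
Proof.
  intros Hinv P. destruct (has_int H j k I Hinv P) as [p hp].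
  destruct (least_int I p hp) as (n&_&hn&hm). exists n. eapply Lint; eauto.
Qed.

Lemma in_nat H j k I g q : heap_inv H -> pos H j k I -> lo I = INR g -> lclosed I = true ->
  (in_int I (INR q) <-> (g <= q < g + 2 ^ j)%nat).
Proof.
  intros Hinv P Hg Hc. pose proof (len_I H j k I Hinv P) as HL. rewrite pow2_INR in HL.
  unfold in_int; rewrite Hc. split.
  - intros [h1 h2]. split; [apply INR_le | apply INR_lt]; rewrite ?plus_INR; lra.
  - intros [h1 h2]. apply le_INR in h1. apply lt_INR in h2. rewrite plus_INR in h2. lra.
Qed.

Lemma pow2_nat j : (1 <= 2 ^ j)%nat.
Proof. induction j; simpl; lia. Qed.

Definition cH H j := length (nth j (buckets H) []).

Fixpoint Qa (c : nat -> nat) (cnt j : nat) : nat :=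
  match cnt with O => O | S cnt' => (c j * 2 ^ j + Qa c cnt' (S j))%nat end.
Definition Q H j := Qa (cH H) (length (buckets H) - j) j.

Lemma Q_step H j : (j < length (buckets H))%nat -> Q H j = (cH H j * 2 ^ j + Q H (S j))%nat.
Proof. intros. unfold Q. replace (length (buckets H) - j)%nat with (S (length (buckets H) - S j)) by lia. reflexivity. Qed.
Lemma Q_top H j : (length (buckets H) <= j)%nat -> Q H j = 0%nat.
Proof. intros. unfold Q. replace (length (buckets H) - j)%nat with 0%nat by lia. reflexivity. Qed.

Lemma cH_range H j : heap_inv H -> (j < length (buckets H))%nat -> cH H j = 1%nat \/ cH H j = 2%nat.
Proof.
  intros Hinv Hj. unfold cH. destruct (nth_error (buckets H) j) as [Bj|] eqn:E.
  - rewrite (nth_error_nth _ _ _ E). eapply bucket_len; eauto.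
  - apply nth_error_Some in Hj. congruence.
Qed.

Lemma other_pos H j k I : heap_inv H -> pos H j k I -> cH H j = 2%nat ->
  exists k2 G, k2 <> k /\ pos H j k2 G.
Proof.
  intros Hinv [Bj [E1 E2]] Hc. unfold cH in Hc. rewrite (nth_error_nth _ _ _ E1) in Hc.
  assert (k < 2)%nat by (rewrite <- Hc; apply nth_error_Some; congruence).
  exists (1 - k)%nat.
  destruct (nth_error Bj (1 - k)) as [G|] eqn:E3.
  - exists G. split; [lia|]. exists Bj; auto.
  - apply nth_error_None in E3. lia.
Qed.

Lemma two_pos H j k I k' J : heap_inv H -> pos H j k I -> pos H j k' J -> k <> k' ->
  cH H j = 2%nat /\ forall k'' I'', pos H j k'' I'' -> I'' = I \/ I'' = J.
Proof.
  intros Hinv [Bj [E1 E2]] [Bj' [E1' E2']] Hne. rewrite E1 in E1'. injection E1' as <-.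
  assert (h1 : (k < length Bj)%nat) by (apply nth_error_Some; congruence).
  assert (h2 : (k' < length Bj)%nat) by (apply nth_error_Some; congruence).
  assert (HL : length Bj = 2%nat) by (destruct (bucket_len H j Bj Hinv E1); lia).
  split.
  - unfold cH. rewrite (nth_error_nth _ _ _ E1). auto.
  - intros k'' I'' [B'' [E1'' E2'']]. rewrite E1 in E1''. injection E1'' as <-.
    assert (h3 : (k'' < length Bj)%nat) by (apply nth_error_Some; congruence).
    assert (k'' = k \/ k'' = k') as [->| ->] by lia; [left|right]; congruence.
Qed.

Lemma self_in H j k I g : heap_inv H -> pos H j k I -> lo I = INR g -> lclosed I = true ->
  in_int I (INR g).
Proof. intros Hinv P Hg Hc. apply (proj2 (in_nat H j k I g g Hinv P Hg Hc)). pose proof (pow2_nat j). lia. Qed.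

Lemma mono_nat H j k I j' k' G q q' : heap_inv H -> pos H j k I -> pos H j' k' G ->
  (j < j')%nat -> in_int I (INR q) -> in_int G (INR q') -> (q' < q)%nat.
Proof. intros Hinv P P' Hlt h1 h2. apply INR_lt. exact (mono H j k I j' k' G _ _ Hinv P P' Hlt h1 h2). Qed.

Lemma claim H : heap_inv H -> forall n j k I, pos H j k I -> lo I = INR n -> lclosed I = true ->
  (n = Q H (S j) \/ (n = Q H (S j) + 2 ^ j /\ cH H j = 2 /\
     forall k' I', pos H j k' I' -> lo I' = INR (Q H (S j)) \/ lo I' = INR n))%nat.
Proof.
  intros Hinv n. pattern n; apply lt_wf_ind; clear n. intros n IH j k I P Hlo Hc.
  pose proof (pos_lt _ _ _ _ P) as Hjm.
  pose proof (self_in H j k I n Hinv P Hlo Hc) as hIn.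
  destruct n as [|p].
  - left. destruct (le_lt_dec (length (buckets H)) (S j)) as [Hle|Hlt].
    + rewrite Q_top; auto.
    + exfalso. destruct (bucket_exists H (S j) Hinv Hlt) as (kk&G&PG).
      destruct (shape H _ _ _ Hinv PG) as (g&Hg&HcG).
      pose proof (self_in H _ _ _ g Hinv PG Hg HcG).
      pose proof (mono_nat H j k I (S j) kk G 0 g Hinv P PG ltac:(lia) hIn H0). lia.
  - pose proof (in_range H j k I _ Hinv P hIn) as Hr.
    assert (hp: 0 <= INR p < INR (time H)).
    { split; [apply pos_INR|]. rewrite S_INR in Hr. lra. }
    destruct (cover H _ Hinv hp) as (j'&k'&J&PJ&hJ).
    destruct (shape H _ _ _ Hinv PJ) as (n'&Hn'&HcJ).
    pose proof (proj1 (in_nat H _ _ _ n' p Hinv PJ Hn' HcJ) hJ) as Hpn'.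
    assert (HSp : (n' + 2 ^ j' = S p)%nat).
    { assert (~ (n' <= S p < n' + 2 ^ j')%nat).
      { intro h. apply (in_nat H _ _ _ n' (S p) Hinv PJ Hn' HcJ) in h.
        destruct (uniqI H j k I j' k' J _ Hinv P PJ hIn h) as (_&_&<-).
        rewrite Hlo in Hn'. apply INR_eq in Hn'. lia. }
      lia. }
    pose proof (pow2_nat j'). pose proof (pow2_nat j).
    destruct (IH n' ltac:(lia) j' k' J PJ Hn' HcJ) as [HJ1|(HJ1&HJ2&HJ3)];
    destruct (lt_eq_lt_dec j' j) as [[Hlt|<-]|Hgt].
    + exfalso. pose proof (mono_nat H j' k' J j k I p (S p) Hinv PJ P Hlt hJ hIn). lia.
    + right. assert (k <> k').
      { intro; subst k'. destruct P as [B1 [E1 E2]]. destruct PJ as [B2 [E3 E4]].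
        rewrite E1 in E3. injection E3 as <-. rewrite E2 in E4. injection E4 as <-.
        rewrite Hlo in Hn'. apply INR_eq in Hn'. lia. }
      destruct (two_pos H j' k I k' J Hinv P PJ H2) as [Hc2 Hall].
      split; [lia|]. split; [auto|].
      intros k'' I'' P''. destruct (Hall k'' I'' P'') as [->| ->]; [right; auto | left; rewrite Hn', HJ1; auto].
    + destruct (le_lt_dec j' (S j)) as [Hle|Hlt2].
      * assert (j' = S j) by lia. subst j'. left.
        destruct (cH_range H (S j) Hinv (pos_lt _ _ _ _ PJ)) as [Hc1|Hc1].
        -- rewrite (Q_step H (S j) (pos_lt _ _ _ _ PJ)). rewrite Hc1. lia.
        -- exfalso. destruct (other_pos H (S j) k' J Hinv PJ Hc1) as (k2&G&Hk2&PG).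
           destruct (shape H _ _ _ Hinv PG) as (g&Hg&HcG).
           pose proof (self_in H _ _ _ g Hinv PG Hg HcG) as hg.
           pose proof (mono_nat H j k I (S j) k2 G (S p) g Hinv P PG ltac:(lia) hIn hg).
           destruct (IH g ltac:(lia) (S j) k2 G PG Hg HcG) as [Hg1|(Hg1&_)].
           ++ assert (hg' : in_int G (INR n')) by (rewrite HJ1, <- Hg1; auto).
              pose proof (proj2 (in_nat H _ _ _ n' n' Hinv PJ Hn' HcJ) ltac:(lia)) as hn'.
              destruct (uniqI H _ _ _ _ _ _ _ Hinv PG PJ hg' hn') as (_&?&_). lia.
           ++ lia.
      * exfalso. destruct (bucket_exists H (S j) Hinv ltac:(pose proof (pos_lt _ _ _ _ PJ); lia)) as (kk&G&PG).
        destruct (shape H _ _ _ Hinv PG) as (g&Hg&HcG).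
        pose proof (self_in H _ _ _ g Hinv PG Hg HcG) as hg.
        pose proof (mono_nat H j k I (S j) kk G (S p) g Hinv P PG ltac:(lia) hIn hg).
        pose proof (mono_nat H (S j) kk G j' k' J g p Hinv PG PJ Hlt2 hg hJ). lia.
    + exfalso. pose proof (mono_nat H j' k' J j k I p (S p) Hinv PJ P Hlt hJ hIn). lia.
    + exfalso. destruct (HJ3 k I P) as [h|h]; rewrite Hlo in h; apply INR_eq in h; lia.
    + destruct (le_lt_dec j' (S j)) as [Hle|Hlt2].
      * assert (j' = S j) by lia. subst j'. left.
        rewrite (Q_step H (S j) (pos_lt _ _ _ _ PJ)). rewrite HJ2. lia.
      * exfalso. destruct (bucket_exists H (S j) Hinv ltac:(pose proof (pos_lt _ _ _ _ PJ); lia)) as (kk&G&PG).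
        destruct (shape H _ _ _ Hinv PG) as (g&Hg&HcG).
        pose proof (self_in H _ _ _ g Hinv PG Hg HcG) as hg.
        pose proof (mono_nat H j k I (S j) kk G (S p) g Hinv P PG ltac:(lia) hIn hg).
        pose proof (mono_nat H (S j) kk G j' k' J g p Hinv PG PJ Hlt2 hg hJ). lia.
Qed.

Lemma Q_Rf H : forall j, (j <= length (buckets H))%nat -> Q H 0 = (Rf (cH H) j + Q H j)%nat.
Proof.
  induction j; intros Hj; [reflexivity|].
  rewrite IHj by lia. rewrite (Q_step H j) by lia. simpl Rf. lia.
Qed.

Lemma time_Q H a : heap_inv H -> In a (elems H) -> time H = Q H 0.
Proof.
  intros Hinv Ha.
  assert (Hat : (a < time H)%nat) by (destruct Hinv as (h&_); auto).
  destruct (time H) as [|p] eqn:Et; [lia|].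
  assert (hp: 0 <= INR p < INR (time H)).
  { split; [apply pos_INR|]. rewrite Et. apply lt_INR. lia. }
  destruct (cover H _ Hinv hp) as (j&k&I&P&hI).
  destruct (shape H _ _ _ Hinv P) as (n&Hn&Hc).
  pose proof (proj1 (in_nat H _ _ _ n p Hinv P Hn Hc) hI) as Hpn.
  assert (Hend : (n + 2 ^ j = S p)%nat).
  { assert (~ (n <= S p < n + 2 ^ j)%nat).
    { intro h. apply (in_nat H _ _ _ n (S p) Hinv P Hn Hc) in h.
      pose proof (in_range H _ _ _ _ Hinv P h). rewrite Et in H0. lra. }
    lia. }
  pose proof (pos_lt _ _ _ _ P) as Hjm.
  assert (j = 0%nat).
  { destruct j as [|j]; auto. exfalso.
    destruct (bucket_exists H 0 Hinv ltac:(lia)) as (kk&G&PG).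
    destruct (shape H _ _ _ Hinv PG) as (g&Hg&HcG).
    pose proof (self_in H _ _ _ g Hinv PG Hg HcG) as hg.
    pose proof (mono_nat H 0 kk G (S j) k I g p Hinv PG P ltac:(lia) hg hI).
    pose proof (in_range H _ _ _ _ Hinv PG hg) as hr. rewrite Et in hr.
    assert (g < S p)%nat by (apply INR_lt; lra). lia. }
  subst j. simpl in Hend.
  rewrite (Q_step H 0) by lia. simpl Nat.pow.
  destruct (claim H Hinv n 0 k I P Hn Hc) as [h|(h&h2&_)].
  - destruct (cH_range H 0 Hinv Hjm) as [Hc1|Hc1]; [rewrite Hc1; lia|].
    exfalso. destruct (other_pos H 0 k I Hinv P Hc1) as (k2&G&Hk2&PG).
    destruct (shape H _ _ _ Hinv PG) as (g&Hg&HcG).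
    pose proof (self_in H _ _ _ g Hinv PG Hg HcG) as hg.
    pose proof (in_range H _ _ _ _ Hinv PG hg) as hr. rewrite Et in hr.
    assert (g < S p)%nat by (apply INR_lt; lra).
    destruct (claim H Hinv g 0 k2 G PG Hg HcG) as [h'|(h'&_)].
    + assert (hn : in_int G (INR n)) by (rewrite h, <- h'; auto).
      pose proof (self_in H _ _ _ n Hinv P Hn Hc) as hnI.
      destruct (uniqI H _ _ _ _ _ _ _ Hinv PG P hn hnI) as (_&?&_). lia.
    + simpl in h'. lia.
  - rewrite h2. simpl in h. lia.
Qed.

Theorem lemma4 :
  exists (prog : list instr) (C : nat),
    forall (w : nat) (H : heap_state) (a : nat),
      heap_inv H ->
      In a (elems H) ->
      (S (time H) < 2 ^ w)%nat ->
      exists rf : regfile,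
        run w prog C 0 (init_regs a (time H)) = Some rf /\
        exists Bj I,
          nth_error (buckets H) (rf 0%nat) = Some Bj /\ In I Bj /\
          lo I = INR (rf 1%nat) /\ in_int I (INR a).
Proof.
  exists prog, 26%nat. intros w H a Hinv Ha Hw.
  assert (Hat : (a < time H)%nat) by (destruct Hinv as (h&_); auto).
  pose proof (time_Q H a Hinv Ha) as Ht.
  assert (hp: 0 <= INR a < INR (time H)) by (split; [apply pos_INR| apply lt_INR; lia]).
  destruct (cover H _ Hinv hp) as (j&k&I&P&hI).
  destruct (shape H _ _ _ Hinv P) as (n&Hn&Hc).
  pose proof (proj1 (in_nat H _ _ _ n a Hinv P Hn Hc) hI) as Han.
  pose proof (pos_lt _ _ _ _ P) as Hjm.
  set (m := length (buckets H)) in *.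
  assert (Hcr : forall i, (i < m)%nat -> (1 <= cH H i <= 2)%nat).
  { intros i hi. destruct (cH_range H i Hinv hi); lia. }
  assert (Ht2 : time H = Rf (cH H) m).
  { rewrite Ht, (Q_Rf H m) by lia. rewrite Q_top by lia. lia. }
  destruct (A1 _ m Hcr m ltac:(lia)) as [hm1 hm2].
  assert (HA2 : forall K, (K <= m)%nat -> (2 ^ K + (S (time H) - 2 ^ m) mod 2 ^ K = Rf (cH H) K + 1)%nat).
  { intros K HK. rewrite Ht2. replace (S (Rf (cH H) m)) with (Rf (cH H) m + 1)%nat by lia.
    rewrite (A2 _ m Hcr K HK). destruct (A1 _ m Hcr K HK). lia. }
  pose proof (Q_Rf H j ltac:(lia)) as Hqj.
  pose proof (Q_Rf H (S j) ltac:(lia)) as Hqsj.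
  rewrite (Q_step H j Hjm) in Hqj. simpl Rf in Hqsj.
  pose proof (pow2_nat j).
  assert (Hne : exists e, (n = Q H (S j) + e * 2 ^ j /\ n + 2 ^ j <= Q H (S j) + cH H j * 2 ^ j)%nat).
  { destruct (claim H Hinv n j k I P Hn Hc) as [h|(h&h2&_)].
    - exists 0%nat. destruct (Hcr j Hjm). nia.
    - exists 1%nat. rewrite h2. lia. }
  destruct Hne as (e&He1&He2).
  destruct (program_correct w a (time H) m j n e) as (rf&Hrun&Hr0&Hr1).
  - exact Hw.
  - simpl in hm2 |- *. lia.
  - lia.
  - rewrite HA2 by lia. lia.
  - rewrite HA2 by lia. simpl Rf. lia.
  - lia.
  - rewrite HA2 by lia. simpl Rf. lia.
  - exists rf. split; [exact Hrun|].
    destruct P as [Bj [E1 E2]]. exists Bj, I. rewrite Hr0, Hr1. repeat split; auto.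
    eapply nth_error_In; eauto.
Qed.
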